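(* Let $\alpha>1$ be rational and $t$ a positive integer. For any instance $(I,B,v,C)$, let $\mathrm{OPT}$ be the optimal value of the Max-Buying-PL-Limited Problem and $\mathrm{OPT}'$ the optimal value of the Max-Buying-PL-Limited-$(\alpha,t)$ Problem on it. Then $\mathrm{OPT}'\ge \mathrm{OPT}/\alpha$.
   Context: Items are $I=\{1,\dots,n\}$, bidders form a finite set $B$, $v=(v_{ib})$ is a non-negative integer valuation matrix and $C_i$ are non-negative integer capacities. Max-Buying-PL-Limited Problem: choose a pricing $p\in\mathbb{Q}_{\ge0}^I$ with $p_1\ge\dots\ge p_n$ and an allocation $x:B\to I\cup\{\emptyset\}$ such that each item $i$ is allocated to at most $C_i$ bidders and $x_b=i$ implies $p_i\le v_{ib}$, maximizing $\sum_{b:x_b\ne\emptyset}p_{x_b}$. For $k\ge0$ let $d_k=\max\{v_{ib}\}/\alpha^k$. Max-Buying-PL-Limited-$(\alpha,t)$ Problem: choose prices $p_1\ge\dots\ge p_n$ with each $p_i\in\{d_0,d_1,\dots\}$ and a set of item–bidder pairs $(i,b)$ such that each item $i$ is given to at most $C_i$ bidders, $p_i\le v_{ib}$ whenever $b$ receives $i$, and for every integer $r\ge0$ each bidder receives at most one item with price in $\{d_{rt},\dots,d_{(r+1)t-1}\}$; the profit is the sum of $p_i$ over allocated pairs $(i,b)$. *)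

(* Defs.v *)
From HB Require Import structures.
From mathcomp Require Import all_boot all_order all_algebra.
Set Implicit Arguments. Unset Strict Implicit. Unset Printing Implicit Defensive.
Import Order.TTheory GRing.Theory Num.Theory.
Local Open Scope ring_scope.

(* Items are 'I_n (item i+1 of the paper is the ordinal i), bidders a finType B,
   valuations v : 'I_n -> B -> nat, capacities C : 'I_n -> nat. *)

Definition nonincreasing_pricing (n : nat) (p : 'I_n -> rat) : Prop :=
  forall i j : 'I_n, (i <= j)%N -> p j <= p i.

Definition feasible_PL (n : nat) (B : finType) (v : 'I_n -> B -> nat)
  (C : 'I_n -> nat) (p : 'I_n -> rat) (x : B -> option 'I_n) : Prop :=
  (forall i, 0 <= p i) /\ nonincreasing_pricing p /\
  (forall i, (#|[set b | x b == Some i]| <= C i)%N) /\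
  (forall b i, x b = Some i -> p i <= (v i b)%:R).

Definition profit_PL (n : nat) (B : finType) (p : 'I_n -> rat)
  (x : B -> option 'I_n) : rat :=
  \sum_(b : B) (if x b is Some i then p i else 0).

(* max_{i,b} v_{ib} (0 if there are no items or no bidders) *)
Definition vmax (n : nat) (B : finType) (v : 'I_n -> B -> nat) : nat :=
  \max_(ib : 'I_n * B) v ib.1 ib.2.

Definition dk (n : nat) (B : finType) (v : 'I_n -> B -> nat) (alpha : rat)
  (k : nat) : rat := (vmax v)%:R / alpha ^+ k.

Definition in_group (n : nat) (B : finType) (v : 'I_n -> B -> nat) (alpha : rat)
  (t r : nat) (x : rat) : Prop :=
  exists k : nat, (r * t <= k < r.+1 * t)%N /\ x = dk v alpha k.

Definition feasible_PLat (n : nat) (B : finType) (v : 'I_n -> B -> nat)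
  (C : 'I_n -> nat) (alpha : rat) (t : nat) (p : 'I_n -> rat)
  (S : {set 'I_n * B}) : Prop :=
  nonincreasing_pricing p /\
  (forall i, exists k : nat, p i = dk v alpha k) /\
  (forall i, (#|[set b | (i, b) \in S]| <= C i)%N) /\
  (forall i b, (i, b) \in S -> p i <= (v i b)%:R) /\
  (forall (r : nat) (b : B) (i j : 'I_n), (i, b) \in S -> (j, b) \in S ->
      in_group v alpha t r (p i) -> in_group v alpha t r (p j) -> i = j).

Definition profit_PLat (n : nat) (B : finType) (p : 'I_n -> rat)
  (S : {set 'I_n * B}) : rat :=
  \sum_(ib in S) p ib.1.

(* Main.v *)
Require Import Defs.
From mathcomp Require Import all_boot all_order all_algebra.
From mathcomp Require Import ring.
Import Order.TTheory GRing.Theory Num.Theory.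
Local Open Scope ring_scope.

Lemma bernoulli_rat (a : rat) (K : nat) : 1 <= a -> 1 + K%:R * (a - 1) <= a ^+ K.
Proof.
move=> a1; elim: K => [|K IH]; first by rewrite expr0 mul0r addr0.
rewrite exprS -natr1.
have h0 : 0 <= a - 1 by rewrite subr_ge0.
have h1 : 0 <= K%:R * (a - 1) by apply: mulr_ge0.
have : a * (1 + K%:R * (a - 1)) <= a * a ^+ K.
  by apply: ler_wpM2l => //; apply: le_trans a1.
apply: le_trans.
have h2 : (a - 1) * (K%:R * (a - 1)) >= 0 by apply: mulr_ge0.
rewrite -subr_ge0.
have -> : a * (1 + K%:R * (a - 1)) - (1 + (K%:R + 1) * (a - 1))
   = (a - 1) * (K%:R * (a - 1)) by ring.
exact: h2.
Qed.

Section S.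
Set Implicit Arguments.
Variables (n : nat) (B : finType) (v : 'I_n -> B -> nat) (alpha : rat).
Hypothesis a1 : 1 < alpha.

Let a0 : 0 < alpha. Proof. exact: lt_trans a1. Qed.

Lemma dk_ge0 k : 0 <= dk v alpha k.
Proof. by rewrite /dk divr_ge0 // exprn_ge0 // ltW. Qed.

Lemma dkS k : dk v alpha k.+1 = dk v alpha k / alpha.
Proof. by rewrite /dk exprS invfM mulrA mulrAC. Qed.

Lemma dk0 : dk v alpha 0 = (vmax v)%:R.
Proof. by rewrite /dk expr0 divr1. Qed.

Lemma dk_le k m : (k <= m)%N -> dk v alpha m <= dk v alpha k.
Proof.
move=> km; rewrite /dk ler_wpM2l // lef_pV2 ?posrE ?exprn_gt0 //.
by rewrite ler_eXn2l.
Qed.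

Lemma dk_small (q : rat) : 0 < q -> exists K, dk v alpha K <= q.
Proof.
move=> q0.
set c := (vmax v)%:R / (q * (alpha - 1)).
have am : 0 < alpha - 1 by rewrite subr_gt0.
have c0 : 0 <= c by rewrite divr_ge0 // mulr_ge0 // ltW.
exists (Num.Def.archi_bound c).
have hb := archi_boundP c0.
set K := Num.Def.archi_bound c in hb *.
have hp : 0 < alpha ^+ K by rewrite exprn_gt0.
rewrite /dk ler_pdivrMr //.
have hB := bernoulli_rat alpha K (ltW a1).
have : (vmax v)%:R <= q * (K%:R * (alpha - 1)).
  move: hb; rewrite /c ltr_pdivrMr ?mulr_gt0 // => hb.
  apply: ltW; apply: (lt_le_trans hb); rewrite le_eqVlt; apply/orP; left; apply/eqP; ring.
move=> h; apply: (le_trans h); rewrite ler_wpM2l ?(ltW q0) //.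
by apply: le_trans hB; rewrite lerDr.
Qed.

End S.

Theorem lemma15 (alpha : rat) (t : nat) (n : nat) (B : finType)
  (v : 'I_n -> B -> nat) (C : 'I_n -> nat) :
  1 < alpha -> (0 < t)%N ->
  forall (p : 'I_n -> rat) (x : B -> option 'I_n),
    feasible_PL v C p x ->
    exists (p' : 'I_n -> rat) (S : {set 'I_n * B}),
      feasible_PLat v C alpha t p' S /\
      profit_PL p x / alpha <= profit_PLat p' S.
Proof.
move=> a1 t0 p x [pge0 [pmon [pcap pval]]].
have a0 : 0 < alpha by apply: lt_trans a1.
have : forall i : 'I_n, exists K, 0 < p i -> dk v alpha K <= p i.
  move=> i; case: (ltP 0 (p i)) => hp.
    by have [K hK] := @dk_small _ _ v _ a1 _ hp; exists K.
  by exists 0%N.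
case/fin_all_exists => Kf hKf.
set K := (\max_i Kf i)%N.
have hK : forall i, 0 < p i -> dk v alpha K <= p i.
  move=> i hi; apply: le_trans (hKf i hi); apply: dk_le => //.
  exact: leq_bigmax.
set a := fun i k => dk v alpha k <= p i.
set kf := fun i => find (a i) (iota 0 K).
set p' := fun i => dk v alpha (kf i).
have kfK : forall i, (kf i <= K)%N.
  by move=> i; have := find_size (a i) (iota 0 K); rewrite size_iota.
have kf_mono : forall i j, p j <= p i -> (kf i <= kf j)%N.
  move=> i j hij; case: (ltnP (kf j) K) => hj; last first.
    by apply: leq_trans (kfK i) hj.
  rewrite leqNgt; apply/negP => hlt.
  have := before_find 0%N hlt; rewrite nth_iota // add0n /a => /negP; apply.
  have := nth_find 0%N (a:=a j) (s:=iota 0 K).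
  rewrite has_find size_iota => /(_ hj); rewrite nth_iota // add0n /a.
  by move/le_trans; apply.
have p'_le : forall i, 0 < p i -> p' i <= p i.
  move=> i hi; rewrite /p'; case: (ltnP (kf i) K) => hk.
    have := nth_find 0%N (a:=a i) (s:=iota 0 K).
    by rewrite has_find size_iota => /(_ hk); rewrite nth_iota // add0n.
  have -> : kf i = K by apply/eqP; rewrite eqn_leq kfK.
  exact: hK.
have p'_ge : forall i, p i <= (vmax v)%:R -> p i / alpha <= p' i.
  move=> i hv; rewrite /p'; case E: (kf i) => [|m].
    rewrite dk0; apply: le_trans hv; rewrite ler_pdivrMr //.
    by rewrite ler_peMr // ltW.
  have hm : (m < kf i)%N by rewrite E.
  have := before_find 0%N hm; rewrite nth_iota; last by apply: leq_trans (kfK i).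
  rewrite add0n /a => /negbT; rewrite -ltNge => h.
  by rewrite dkS ler_pM2r ?invr_gt0 // ltW.
set S := [set ib : 'I_n * B | (x ib.2 == Some ib.1) && (0 < p ib.1)].
exists p', S; split.
  split.
    move=> i j ij; apply: dk_le => //; apply: kf_mono; exact: pmon.
  split; first by move=> i; exists (kf i).
  split.
    move=> i; apply: leq_trans (pcap i); apply: subset_leq_card.
    by apply/subsetP=> b; rewrite !inE => /andP[].
  split.
    move=> i b; rewrite inE /= => /andP[/eqP hx hp].
    by apply: le_trans (pval _ _ hx); apply: p'_le.
  move=> r b i j; rewrite !inE /= => /andP[/eqP hi _] /andP[/eqP hj _] _ _.
  by move: hi; rewrite hj => -[].
rewrite /profit_PL /profit_PLat mulr_suml big_mkcond /=.
have E0 : \sum_(ib : 'I_n * B) (if ib \in S then p' ib.1 else 0)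
   = \sum_i \sum_b (if (i, b) \in S then p' i else 0)
  by rewrite pair_bigA; apply: eq_bigr => -[i b].
rewrite [X in _ <= X]big_mkcond E0.
rewrite exchange_big /=; apply: ler_sum => b _.
have p'0 : forall i, 0 <= p' i by move=> i; apply: dk_ge0.
have tge0 : forall i, 0 <= (if (i, b) \in S then p' i else 0).
  by move=> i; case: ifP.
case E: (x b) => [i0|]; last by rewrite mul0r; apply: sumr_ge0.
rewrite (bigD1 i0) //= -[X in X <= _]addr0; apply: lerD; last by apply: sumr_ge0.
rewrite inE /= E eqxx /=; case: ltP => hp.
  apply: p'_ge; apply: (le_trans (pval _ _ E)); rewrite ler_nat.
  exact: (@leq_bigmax _ (fun ib : 'I_n * B => v ib.1 ib.2) (i0, b)).
have -> : p i0 = 0 by apply/eqP; rewrite eq_le hp pge0.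
by rewrite mul0r.
Qed.
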